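(* Let $X$ be a finite set and $V=\mathbb F_2(X)$ the algebra of $\mathbb F_2$-valued functions on $X$ with pointwise product, with basis $x^\mu=\delta_\mu$ ($\mu\in X$), so $x^\mu\circ x^\nu=\delta_{\mu\nu}x^\mu$ and the calculus on $A=\mathbb F_2[x^\mu:\mu\in X]$ has $[\mathrm dx^\mu,x^\nu]=\delta_{\mu\nu}\mathrm dx^\mu$. Let $g=\sum_{\mu\in X}\mathrm dx^\mu\otimes\mathrm dx^\mu$. Suppose $X=T\sqcup S\sqcup\bar S$ is a partition into three disjoint subsets together with a bijection $S\to\bar S$, $s\mapsto\bar s$. Define $\nabla$ and $\sigma$ by $\nabla\mathrm dx^t=0$ for $t\in T$, and $\nabla\mathrm dx^s=\nabla\mathrm dx^{\bar s}=(\mathrm dx^s+\mathrm dx^{\bar s})\otimes(\mathrm dx^s+\mathrm dx^{\bar s})$ for $s\in S$ (extended by the left Leibniz rule), and $\sigma(\mathrm dx^s\otimes\mathrm dx^s)=\mathrm dx^{\bar s}\otimes\mathrm dx^{\bar s}$, $\sigma(\mathrm dx^{\bar s}\otimes\mathrm dx^{\bar s})=\mathrm dx^s\otimes\mathrm dx^s$, $\sigma(\mathrm dx^s\otimes\mathrm dx^{\bar s})=\mathrm dx^s\otimes\mathrm dx^{\bar s}$, $\sigma(\mathrm dx^{\bar s}\otimes\mathrm dx^s)=\mathrm dx^{\bar s}\otimes\mathrm dx^s$ for $s\in S$, and $\sigma(\mathrm dx^\mu\otimes\mathrm dx^\nu)=\mathrm dx^\nu\otimes\mathrm dx^\mu$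 on all other pairs of generators (extended as a left module map). Then $g$ is a quantum metric, $(\nabla,\sigma)$ is a quantum Levi-Civita connection for $g$, and $R_\nabla=0$.
   Context: Standing setup. Work over $\mathbb F_2$. Let $(V,\circ)$ be a commutative associative algebra over $\mathbb F_2$ with basis $x^1,\dots,x^n$ and structure constants $x^\mu\circ x^\nu=\sum_\rho V^{\mu\nu}{}_\rho x^\rho$. Let $A=\mathbb F_2[x^1,\dots,x^n]$ be the polynomial algebra on the same symbols. The associated differential calculus is the $A$-bimodule $\Omega^1$ which is free as a left $A$-module on $\mathrm dx^1,\dots,\mathrm dx^n$, with right action determined by $\mathrm dx^\mu\, x^\nu=x^\nu\,\mathrm dx^\mu+\sum_\rho V^{\mu\nu}{}_\rho\,\mathrm dx^\rho$, together with the unique map $\mathrm d:A\to\Omega^1$ satisfying the Leibniz rule $\mathrm d(ab)=(\mathrm da)b+a\,\mathrm db$, $\mathrm d(x^\mu)=\mathrm dx^\mu$, $\mathrm d1=0$. The bimodule $\Omega^1\otimes_A\Omega^1$ is free as a left module on $\mathrm dx^\mu\otimes\mathrm dx^\nu$. $\Omega^2$ is the quotient of $\Omega^1\otimes_A\Omega^1$ by the sub-bimodule generated by $\mathrm dx^\mu\otimes\mathrm dx^\mu$ and $\mathrm dx^\mu\otimes\mathrm dx^\nu+\mathrm dx^\nu\otimes \mathrm dx^\mu$; the quotient map is denoted $\wedge$, and $\mathrm d$ is extended to $\Omega^1$ by $\mathrm d(a\,\mathrm dx^\mu)=\mathrm da\wedge\mathrm dx^\mu$. A quantum metric is $g=\sum_{\mu,\nu}g_{\mu\nu}\mathrm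 dx^\mu\otimes\mathrm dx^\nu$ with constants $g_{\mu\nu}\in\mathbb F_2$, $g_{\mu\nu}=g_{\nu\mu}$, the matrix $(g_{\mu\nu})$ invertible, and $g$ central: $x^\rho g=g x^\rho$ for all $\rho$. A bimodule connection is a pair $(\nabla,\sigma)$ with $\nabla:\Omega^1\to\Omega^1\otimes_A\Omega^1$ additive, $\nabla(a\omega)=a\nabla\omega+\mathrm da\otimes\omega$, and $\sigma:\Omega^1\otimes_A\Omega^1\to\Omega^1\otimes_A\Omega^1$ a bimodule map with $\nabla(\omega a)=(\nabla\omega)a+\sigma(\omega\otimes\mathrm da)$. It has constant coefficients if $\nabla\mathrm dx^\mu=\sum\Gamma^\mu{}_{\nu\rho}\mathrm dx^\nu\otimes\mathrm dx^\rho$ with $\Gamma^\mu{}_{\nu\rho}\in\mathbb F_2$. A quantum Levi-Civita connection (QLC) for $g$ is a bimodule connection with $\sigma$ invertible, torsion free ($\wedge\nabla=\mathrm d$ on $\Omega^1$) and metric compatible ($(\nabla\otimes\mathrm{id})g+(\sigma\otimes\mathrm{id})(\mathrm{id}\otimes\nabla)g=0$). Its curvature is $R_\nabla=(\mathrm d\otimes\mathrm{id}-(\wedge\otimes\mathrm{id})(\mathrm{id}\otimes\nabla))\nabla:\Omega^1\to\Omega^2\otimes_A\Omega^1$. *)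

(* Defs.v *)
(* Polynomials in A = F_2[x^mu : mu in X] are represented as lists of
   monomials read as their sum mod 2; equality is coefficientwise (peq).
   Omega^1, Omega^1 (x)_A Omega^1, Omega^1 (x)_A Omega^1 (x)_A Omega^1 are free
   left A-modules on dx^mu, dx^mu (x) dx^nu, ... and are represented by their
   coefficient functions. *)
From HB Require Import structures.
From mathcomp Require Import all_boot all_order.
Set Implicit Arguments.
Unset Strict Implicit.
Unset Printing Implicit Defensive.

Section Calculus.
Variable X : finType.

Definition mon := {ffun X -> nat}.
Definition poly := seq mon.
Definition monmul (m1 m2 : mon) : mon := [ffun i => m1 i + m2 i].
Definition mon1 : mon := [ffun _ => 0].
Definition pzero : poly := [::].
Definition pone : poly := [:: mon1].
Definition padd (p q : poly) : poly := p ++ q.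
Definition pmul (p q : poly) : poly := [seq monmul m1 m2 | m1 <- p, m2 <- q].
Definition pvar (mu : X) : poly := [:: [ffun i => nat_of_bool (i == mu)]].
Definition pconst (b : bool) : poly := if b then pone else pzero.
Definition coef (p : poly) (m : mon) : bool := odd (count_mem m p).
Definition peq (p q : poly) : Prop := forall m, coef p m = coef q m.
Definition psum (F : X -> poly) : poly := flatten [seq F i | i <- enum X].
Definition monvars (m : mon) : seq X := flatten [seq nseq (m i) i | i <- enum X].

Definition form1 := X -> poly.
Definition form2 := X -> X -> poly.
Definition form3 := X -> X -> X -> poly.

Definition eq1 (w w' : form1) := forall a, peq (w a) (w' a).
Definition eq2 (t t' : form2) := forall a b, peq (t a b) (t' a b).
Definition eq3 (t t' : form3) := forall a b c, peq (t a b c) (t' a b c).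
Definition zero1 : form1 := fun _ => pzero.
Definition zero2 : form2 := fun _ _ => pzero.
Definition zero3 : form3 := fun _ _ _ => pzero.
Definition add1 (w w' : form1) : form1 := fun a => padd (w a) (w' a).
Definition add2 (t t' : form2) : form2 := fun a b => padd (t a b) (t' a b).
Definition add3 (t t' : form3) : form3 := fun a b c => padd (t a b c) (t' a b c).
Definition lmul1 (p : poly) (w : form1) : form1 := fun a => pmul p (w a).
Definition lmul2 (p : poly) (t : form2) : form2 := fun a b => pmul p (t a b).
Definition lmul3 (p : poly) (t : form3) : form3 := fun a b c => pmul p (t a b c).
Definition psum1 (F : X -> form1) : form1 := fun a => psum (fun i => F i a).
Definition psum2 (F : X -> form2) : form2 := fun a b => psum (fun i => F i a b).
Definition psum3 (F : X -> form3) : form3 := fun a b c => psum (fun i => F i a b c).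
Definition e1 (mu : X) : form1 := fun a => pconst (a == mu).
Definition e2 (mu nu : X) : form2 := fun a b => pconst ((a == mu) && (b == nu)).
(* w (x) dx^nu  and  t (x) dx^nu *)
Definition tb1 (w : form1) (nu : X) : form2 :=
  fun a b => if b == nu then w a else pzero.
Definition tb2 (t : form2) (nu : X) : form3 :=
  fun a b c => if c == nu then t a b else pzero.

Section Structure.
(* structure constants:  x^mu o x^nu = sum_rho V mu nu rho x^rho *)
Variable V : X -> X -> X -> bool.

(* right action of x^nu on Omega^1:
   dx^mu x^nu = x^nu dx^mu + sum_rho V^{mu nu}_rho dx^rho *)
Definition R1 (nu : X) (w : form1) : form1 :=
  fun rho => padd (pmul (pvar nu) (w rho))
                  (psum (fun mu => pmul (pconst (V mu nu rho)) (w mu))).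
Definition ract1_list (w : form1) (s : seq X) : form1 :=
  foldl (fun w nu => R1 nu w) w s.
Definition ract1 (w : form1) (p : poly) : form1 :=
  fun rho => flatten [seq ract1_list w (monvars m) rho | m <- p].
(* right action on Omega^1 (x)_A Omega^1 :
   (t_{al be} dx^al (x) dx^be) a = t_{al be} dx^al (x) (dx^be a) *)
Definition ract2 (t : form2) (p : poly) : form2 :=
  fun ga de => flatten [seq pmul (t al be) (ract1 (e1 al) (ract1 (e1 be) p de) ga)
                       | al <- enum X, be <- enum X].
(* the exterior derivative d : A -> Omega^1, the map with
   d(x^nu b) = (dx^nu) b + x^nu db, d 1 = 0, extended additively *)
Fixpoint dlist (s : seq X) : form1 :=
  match s with
  | [::] => zero1
  | nu :: s' => add1 (ract1_list (e1 nu) s') (lmul1 (pvar nu) (dlist s'))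
  end.
Definition dpoly (p : poly) : form1 :=
  fun rho => flatten [seq dlist (monvars m) rho | m <- p].
(* representative in Omega^1 (x) Omega^1 of d(sum_be w_be dx^be) = sum_be dw_be /\ dx^be *)
Definition dform1 (w : form1) : form2 := fun al be => dpoly (w be) al.
Definition tens11 (w eta : form1) : form2 :=
  fun al be => flatten [seq pmul (w mu) (ract1 (e1 mu) (eta be) al) | mu <- enum X].
Definition tens12 (w : form1) (t : form2) : form3 :=
  fun ga al be => flatten [seq pmul (w mu) (ract1 (e1 mu) (t al be) ga) | mu <- enum X].
Definition sigma_id (sigma : form2 -> form2) (t : form3) : form3 :=
  fun a b c => sigma (fun a' b' => t a' b' c) a b.

(* the sub-bimodule N2 of Omega^1 (x)_A Omega^1 generated by dx^mu(x)dx^mu and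
   dx^mu(x)dx^nu + dx^nu(x)dx^mu ; Omega^2 = (Omega^1(x)Omega^1)/N2 *)
Inductive inN2 : form2 -> Prop :=
| N2_gen1 mu : inN2 (e2 mu mu)
| N2_gen2 mu nu : inN2 (add2 (e2 mu nu) (e2 nu mu))
| N2_zero : inN2 zero2
| N2_add t t' : inN2 t -> inN2 t' -> inN2 (add2 t t')
| N2_lmul p t : inN2 t -> inN2 (lmul2 p t)
| N2_rmul p t : inN2 t -> inN2 (ract2 t p)
| N2_eq t t' : inN2 t -> eq2 t t' -> inN2 t'.

(* the kernel N3 of Omega^1(x)Omega^1(x)Omega^1 -> Omega^2 (x)_A Omega^1,
   i.e. the image of N2 (x)_A Omega^1 *)
Inductive inN3 : form3 -> Prop :=
| N3_gen t nu : inN2 t -> inN3 (tb2 t nu)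
| N3_zero : inN3 zero3
| N3_add t t' : inN3 t -> inN3 t' -> inN3 (add3 t t')
| N3_eq t t' : inN3 t -> eq3 t t' -> inN3 t'.

Definition gform (g : X -> X -> bool) : form2 := fun a b => pconst (g a b).

Definition is_qmetric (g : X -> X -> bool) : Prop :=
  (forall mu nu, g mu nu = g nu mu) /\
  (exists h : X -> X -> bool, forall mu ka,
      \big[addb/false]_(nu : X) (g mu nu && h nu ka) = (mu == ka) /\
      \big[addb/false]_(nu : X) (h mu nu && g nu ka) = (mu == ka)) /\
  (forall rho, eq2 (lmul2 (pvar rho) (gform g)) (ract2 (gform g) (pvar rho))).

Definition bimodule_map2 (sigma : form2 -> form2) : Prop :=
  (forall t t', eq2 t t' -> eq2 (sigma t) (sigma t')) /\
  (forall t t', eq2 (sigma (add2 t t')) (add2 (sigma t) (sigma t'))) /\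
  (forall p t, eq2 (sigma (lmul2 p t)) (lmul2 p (sigma t))) /\
  (forall p t, eq2 (sigma (ract2 t p)) (ract2 (sigma t) p)).

Definition invertible2 (sigma : form2 -> form2) : Prop :=
  exists sigma' : form2 -> form2,
    forall t, eq2 (sigma (sigma' t)) t /\ eq2 (sigma' (sigma t)) t.

Definition bimodule_connection (nabla : form1 -> form2) (sigma : form2 -> form2) : Prop :=
  (forall w w', eq1 w w' -> eq2 (nabla w) (nabla w')) /\
  (forall w w', eq2 (nabla (add1 w w')) (add2 (nabla w) (nabla w'))) /\
  (forall p w, eq2 (nabla (lmul1 p w)) (add2 (lmul2 p (nabla w)) (tens11 (dpoly p) w))) /\
  bimodule_map2 sigma /\
  (forall w p, eq2 (nabla (ract1 w p))
                   (add2 (ract2 (nabla w) p) (sigma (tens11 w (dpoly p))))).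

(* wedge o nabla = d  (over F_2, minus = plus) *)
Definition torsion_free (nabla : form1 -> form2) : Prop :=
  forall w, inN2 (add2 (nabla w) (dform1 w)).

Definition metric_compatible (g : X -> X -> bool) (nabla : form1 -> form2)
    (sigma : form2 -> form2) : Prop :=
  eq3 (add3 (psum3 (fun mu => psum3 (fun nu =>
               lmul3 (pconst (g mu nu)) (tb2 (nabla (e1 mu)) nu))))
            (sigma_id sigma (psum3 (fun mu => psum3 (fun nu =>
               lmul3 (pconst (g mu nu)) (tens12 (e1 mu) (nabla (e1 nu))))))))
      zero3.

Definition is_QLC (g : X -> X -> bool) (nabla : form1 -> form2)
    (sigma : form2 -> form2) : Prop :=
  bimodule_connection nabla sigma /\ invertible2 sigma /\
  torsion_free nabla /\ metric_compatible g nabla sigma.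

(* representative of R_nabla(w) = (d(x)id - (wedge(x)id)(id(x)nabla)) nabla w,
   writing nabla w = sum_be xi_be (x) dx^be *)
Definition curvature (nabla : form1 -> form2) (w : form1) : form3 :=
  let t := nabla w in
  psum3 (fun be => let xi := fun al => t al be in
     add3 (tb2 (dform1 xi) be) (tens12 xi (nabla (e1 be)))).

Definition curvature_zero (nabla : form1 -> form2) : Prop :=
  forall w, inN3 (curvature nabla w).

End Structure.

Definition deltaV (mu nu rho : X) : bool := (mu == nu) && (nu == rho).
Definition gdiag (mu nu : X) : bool := mu == nu.

Section Prop51.
Variables (T S Sbar : {set X}) (bar : X -> X).

(* s |-> bar s on S, bar s |-> s on Sbar *)
Definition partner (mu : X) : X :=
  if mu \in S then bar mu else odflt mu [pick s in S | bar s == mu].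

Definition Gam51 (mu : X) : form2 :=
  if mu \in T then zero2
  else fun a b => pconst (((a == mu) || (a == partner mu)) && ((b == mu) || (b == partner mu))).

(* nabla extended by the left Leibniz rule *)
Definition nabla51 (w : form1) : form2 :=
  add2 (psum2 (fun mu => lmul2 (w mu) (Gam51 mu)))
       (psum2 (fun mu => tb1 (dpoly deltaV (w mu)) mu)).

Definition sig51 (mu nu : X) : form2 :=
  if mu \in S :|: Sbar then
    (if nu == mu then e2 (partner mu) (partner mu)
     else if nu == partner mu then e2 mu nu
     else e2 nu mu)
  else e2 nu mu.

(* sigma extended as a left module map *)
Definition sigma51 (t : form2) : form2 :=
  fun a b => flatten [seq pmul (t mu nu) (sig51 mu nu a b) | mu <- enum X, nu <- enum X].

End Prop51.
End Calculus.

(* Main.v *)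
From HB Require Import structures.
From mathcomp Require Import all_boot all_order all_algebra.
From mathcomp Require Import ring.
From mathcomp.multinomials Require Import mpoly.
Require Import Defs.
Import GRing.Theory.
Set Implicit Arguments.
Unset Strict Implicit.
Unset Printing Implicit Defensive.

Section Sem.
Variable X : finType.
Local Notation n := #|X|.
Local Notation R := {mpoly 'Z_2[n]}.
Local Open Scope ring_scope.

Lemma two0 : (2%:R : 'Z_2) = 0. Proof. by apply/val_inj. Qed.
Lemma two0R : (2%:R : R) = 0. Proof. by rewrite -mpolyC_nat two0 mpolyC0. Qed.
Lemma addxx (x : R) : x + x = 0. Proof. by rewrite -mulr2n -mulr_natr two0R mulr0. Qed.
Lemma oppR (x : R) : - x = x. Proof. by apply/eqP; rewrite eq_sym -subr_eq0 opprK addxx. Qed.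

Definition idx (i : X) : 'I_n := enum_rank i.
Definition mm (m : mon X) : 'X_{1..n} := [multinom m (enum_val j) | j < n].
Definition mono (m : mon X) : R := 'X_[mm m].
Definition sem (p : Defs.poly X) : R := \sum_(m <- p) mono m.

Lemma mmE m i : mm m (idx i) = m i.
Proof. by rewrite /mm mnmE /idx enum_rankK. Qed.

Lemma mm_inj : injective mm.
Proof. move=> m1 m2 h; apply/ffunP=> i; by rewrite -!mmE h. Qed.

Definition unmm (k : 'X_{1..n}) : mon X := [ffun i => k (idx i)].
Lemma mmK k : mm (unmm k) = k.
Proof. apply/mnmP=> j; rewrite /mm mnmE /unmm ffunE /idx enum_valK. by []. Qed.

Lemma nat_Z2 k : (k%:R : 'Z_2) = (odd k)%:R.
Proof. by apply/val_inj; rewrite /= !Zp_nat /= modn2; case: (odd k). Qed.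

Lemma mcoeff_sem p m : (sem p)@_(mm m) = (coef p m)%:R.
Proof.
rewrite /sem /coef -nat_Z2; elim: p => [|x p IH]; first by rewrite big_nil mcoeff0.
rewrite big_cons mcoeffD IH /mono mcoeffX /= natrD (inj_eq mm_inj) eq_sym.
by case: (x == m).
Qed.

Lemma sem_inj p q : sem p = sem q -> peq p q.
Proof.
move=> h m; have := mcoeff_sem p m; rewrite h mcoeff_sem.
by case: (coef p m); case: (coef q m) => //= /(congr1 val).
Qed.

Lemma peq_sem p q : peq p q -> sem p = sem q.
Proof.
move=> h; apply/mpolyP=> k; rewrite -(mmK k) !mcoeff_sem; by rewrite h.
Qed.

Lemma sem_cat p q : sem (p ++ q) = sem p + sem q.
Proof. by rewrite /sem big_cat. Qed.

Lemma sem_flatten (I : Type) (s : seq I) (F : I -> Defs.poly X) :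
  sem (flatten [seq F i | i <- s]) = \sum_(i <- s) sem (F i).
Proof. elim: s => [|x s IH]; first by rewrite big_nil /sem big_nil.
by rewrite /= sem_cat IH big_cons. Qed.

Lemma mm_mul m1 m2 : mm (monmul m1 m2) = (mm m1 + mm m2)%MM.
Proof. apply/mnmP=> j; by rewrite mnmDE /mm !mnmE /monmul ffunE. Qed.

Lemma sem_pmul p q : sem (pmul p q) = sem p * sem q.
Proof.
rewrite /pmul /sem; elim: p => [|x p IH]; first by rewrite !big_nil mul0r.
rewrite /= big_cat IH big_cons mulrDl big_map mulr_sumr; congr (_ + _).
rewrite mulr_sumr; apply: eq_bigr => m _; by rewrite /mono mm_mul mpolyXD.
Qed.

Lemma sem_pzero : sem (pzero X) = 0. Proof. by rewrite /sem big_nil. Qed.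
Lemma sem_pone : sem (pone X) = 1.
Proof.
rewrite /sem big_seq1 /mono -mpolyX0; congr 'X_[_]; apply/mnmP=> j.
by rewrite mnm0E /mm mnmE /mon1 ffunE.
Qed.
Lemma sem_pconst b : sem (pconst X b) = b%:R.
Proof. case: b; [exact: sem_pone | exact: sem_pzero]. Qed.
Lemma sem_pvar mu : sem (pvar mu) = 'X_(idx mu).
Proof.
rewrite /sem big_seq1 /mono; congr 'X_[_]; apply/mnmP=> j.
rewrite mnm1E /mm mnmE ffunE /idx.
by rewrite -(inj_eq enum_val_inj) enum_rankK eq_sym.
Qed.
Lemma sem_psum F : sem (psum F) = \sum_(i <- enum X) sem (F i).
Proof. by rewrite /psum sem_flatten. Qed.
Lemma sem_padd p q : sem (padd p q) = sem p + sem q. Proof. exact: sem_cat. Qed.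


Lemma prod_nseq (h : X -> R) k a : \prod_(x <- nseq k a) h x = h a ^+ k.
Proof. elim: k => [|k IH]; first by rewrite big_nil expr0. by rewrite /= big_cons IH exprS. Qed.

Lemma monvars_prod (h : X -> R) m :
  \prod_(nu <- monvars m) h nu = \prod_(i <- enum X) h i ^+ m i.
Proof.
rewrite /monvars; elim: (enum X) => [|x s IH]; first by rewrite !big_nil.
by rewrite /= big_cat IH prod_nseq big_cons.
Qed.

Definition tup (h : X -> R) : n.-tuple R := [tuple h (enum_val j) | j < n].

Lemma mono_comp h m : mono m \mPo tup h = \prod_(nu <- monvars m) h nu.
Proof.
rewrite monvars_prod comp_mpolyX [RHS]big_enum [RHS]big_enum_val /=.
by apply: eq_bigr => j _; rewrite tnth_mktuple /mm mnmE.
Qed.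

Definition shift (r : X) (i : X) : R := 'X_(idx i) + (i == r)%:R.
Local Notation tau r := (comp_mpoly (tup (shift r))).

Lemma tau_X r i : tau r 'X_(idx i) = 'X_(idx i) + (i == r)%:R.
Proof. by rewrite comp_mpolyXU -tnth_nth tnth_mktuple /idx enum_rankK. Qed.

Lemma tauM r (p q : R) : tau r (p * q) = tau r p * tau r q.
Proof. by rewrite rmorphM. Qed.
Lemma tauD r (p q : R) : tau r (p + q) = tau r p + tau r q.
Proof. by rewrite comp_mpolyD. Qed.
Lemma tauB r (p q : R) : tau r (p - q) = tau r p - tau r q.
Proof. by rewrite comp_mpolyB. Qed.
Lemma tauN r (p : R) : tau r (- p) = - tau r p.
Proof. by rewrite comp_mpolyN. Qed.
Lemma tau0 r : tau r 0 = 0.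
Proof. by rewrite comp_mpoly0. Qed.


Lemma sum_only (F : X -> R) a : (forall i, i != a -> F i = 0) -> \sum_(i <- enum X) F i = F a.
Proof.
move=> h; rewrite (bigD1_seq a) ?mem_enum ?enum_uniq //= big1_seq ?addr0 // => i /andP[/h].
by [].
Qed.
Arguments sum_only F a : clear implicits.

Lemma tup_X : tup (fun i => 'X_(idx i)) = [tuple 'X_i | i < n].
Proof. apply: eq_from_tnth => j; by rewrite !tnth_mktuple /idx enum_valK. Qed.

Lemma mono_id m : \prod_(nu <- monvars m) 'X_(idx nu) = mono m.
Proof. by rewrite -(mono_comp (fun i => 'X_(idx i))) tup_X comp_mpoly_id. Qed.

Lemma tau_sem r p : tau r (sem p) = \sum_(m <- p) \prod_(nu <- monvars m) shift r nu.
Proof. rewrite /sem raddf_sum; apply: eq_bigr => m _; exact: mono_comp. Qed.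

Lemma tau_nat r k : tau r (k%:R) = k%:R. Proof. exact: rmorph_nat. Qed.

Lemma tau_shift a b nu : tau a (shift b nu) = 'X_(idx nu) + (nu == a)%:R + (nu == b)%:R.
Proof. by rewrite /shift comp_mpolyD tau_X tau_nat. Qed.

Lemma tauC a b p : tau a (tau b (sem p)) = tau b (tau a (sem p)).
Proof.
rewrite !tau_sem !raddf_sum /=; apply: eq_bigr => m _; rewrite !rmorph_prod.
by apply: eq_bigr => nu _; rewrite /= !tau_shift addrAC.
Qed.

Lemma tauK a p : tau a (tau a (sem p)) = sem p.
Proof.
rewrite !tau_sem !raddf_sum /sem /=; apply: eq_bigr => m _; rewrite !rmorph_prod -mono_id.
by apply: eq_bigr => nu _; rewrite /= !tau_shift -addrA addxx addr0.
Qed.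

Lemma tau_natK a b : tau a (b%:R) = b%:R. Proof. exact: rmorph_nat. Qed.

Local Notation V := (@deltaV X).

Lemma sem_e1 mu a : sem (e1 mu a) = (a == mu)%:R.
Proof. exact: sem_pconst. Qed.
Lemma sem_e2 mu nu a b : sem (e2 mu nu a b) = ((a == mu) && (b == nu))%:R.
Proof. exact: sem_pconst. Qed.

Lemma natr_and (b1 b2 : bool) : ((b1 && b2)%:R : R) = b1%:R * b2%:R.
Proof. by case: b1; case: b2; rewrite ?mul1r ?mul0r. Qed.

Lemma sem_R1 nu w rho : sem (R1 V nu w rho) = shift rho nu * sem (w rho).
Proof.
rewrite /R1 sem_padd sem_pmul sem_pvar sem_psum.
rewrite (sum_only _ nu) => [|i inu]; last by rewrite sem_pmul sem_pconst /deltaV (negbTE inu) mul0r.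
rewrite sem_pmul sem_pconst /deltaV eqxx /= /shift.
by case: eqP => [->|_]; rewrite ?mul0r ?addr0 // mul1r mulrDl mul1r.
Qed.

Lemma sem_ract1_list s w rho :
  sem (ract1_list V w s rho) = sem (w rho) * \prod_(nu <- s) shift rho nu.
Proof.
elim: s w => [|nu s IH] w /=; first by rewrite big_nil mulr1.
by rewrite IH sem_R1 big_cons mulrA [sem _ * _]mulrC.
Qed.

Lemma sem_ract1 w p rho : sem (ract1 V w p rho) = sem (w rho) * tau rho (sem p).
Proof.
rewrite /ract1 sem_flatten tau_sem mulr_sumr; apply: eq_bigr => m _.
exact: sem_ract1_list.
Qed.

Lemma sem_allpairs (I J : Type) (s : seq I) (t : seq J) (F : I -> J -> Defs.poly X) :
  sem (flatten [seq F x y | x <- s, y <- t]) = \sum_(x <- s) \sum_(y <- t) sem (F x y).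
Proof.
elim: s => [|x s IH]; first by rewrite big_nil /sem big_nil.
by rewrite /= flatten_cat sem_cat IH sem_flatten big_cons.
Qed.

Lemma sem_ract2 t p a b : sem (ract2 V t p a b) = sem (t a b) * tau a (tau b (sem p)).
Proof.
rewrite /ract2 sem_allpairs (sum_only _ a) => [|i ia].
  rewrite (sum_only _ b) => [|j jb].
    by rewrite sem_pmul sem_ract1 sem_e1 eqxx mul1r sem_ract1 sem_e1 eqxx mul1r.
  by rewrite sem_pmul sem_ract1 sem_ract1 !sem_e1 [b == j]eq_sym (negbTE jb) mul0r rmorph0 mulr0 mulr0.
by rewrite big1 // => j _; rewrite sem_pmul sem_ract1 sem_e1 eq_sym (negbTE ia) mul0r mulr0.
Qed.

Lemma sem_dlist s rho :
  sem (dlist V s rho) = \prod_(nu <- s) shift rho nu - \prod_(nu <- s) 'X_(idx nu).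
Proof.
elim: s => [|nu s IH]; first by rewrite /= sem_pzero !big_nil subrr.
rewrite /= /add1 /lmul1 sem_padd sem_pmul IH sem_pvar sem_ract1_list sem_e1 !big_cons /shift.
rewrite eq_sym; ring.
Qed.

Lemma sem_dpoly p rho : sem (dpoly V p rho) = tau rho (sem p) - sem p.
Proof.
rewrite /dpoly sem_flatten tau_sem [sem p]/sem -sumrB; apply: eq_bigr => m _.
by rewrite sem_dlist mono_id.
Qed.

Lemma sem_tens11 w e a b : sem (tens11 V w e a b) = sem (w a) * tau a (sem (e b)).
Proof.
rewrite /tens11 sem_flatten (sum_only _ a) => [|i ia].
  by rewrite sem_pmul sem_ract1 sem_e1 eqxx mul1r.
by rewrite sem_pmul sem_ract1 sem_e1 eq_sym (negbTE ia) mul0r mulr0.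
Qed.

Lemma sem_tens12 w t c a b : sem (tens12 V w t c a b) = sem (w c) * tau c (sem (t a b)).
Proof.
rewrite /tens12 sem_flatten (sum_only _ c) => [|i ic].
  by rewrite sem_pmul sem_ract1 sem_e1 eqxx mul1r.
by rewrite sem_pmul sem_ract1 sem_e1 eq_sym (negbTE ic) mul0r mulr0.
Qed.

Lemma sem_dform1 w a b : sem (dform1 V w a b) = tau a (sem (w b)) - sem (w b).
Proof. exact: sem_dpoly. Qed.

End Sem.

Section P51.
Arguments sum_only {X} F a.
Variable X : finType.
Local Notation n := #|X|.
Local Notation R := {mpoly 'Z_2[n]}.
Local Open Scope ring_scope.
Local Notation tau r := (comp_mpoly (tup (shift r))).
Local Notation V := (@deltaV X).
Variables (T S Sbar : {set X}) (bar : X -> X).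
Hypotheses (hTS : [disjoint T & S]) (hTSbar : [disjoint T & Sbar])
    (hSSbar : [disjoint S & Sbar]) (hcover : T :|: S :|: Sbar = [set: X])
    (hinj : {in S &, injective bar}) (himg : bar @: S = Sbar).
Local Notation SS := (S :|: Sbar).
Local Notation pt := (partner S bar).

Lemma notT mu : (mu \notin T) = (mu \in SS).
Proof.
have := in_setT mu; rewrite -hcover !in_setU.
case hT: (mu \in T) => /=.
  by rewrite (disjointFr hTS hT) (disjointFr hTSbar hT).
by rewrite /= => ->.
Qed.

Lemma pt_spec mu : mu \in SS -> [/\ pt mu \in SS, pt mu != mu & pt (pt mu) = mu].
Proof.
rewrite in_setU => /orP[muS|muSb].
  have bS : bar mu \in Sbar by rewrite -himg imset_f.
  have bnS : bar mu \notin S by rewrite (disjointFl hSSbar bS).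
  rewrite /partner muS; split.
  - by rewrite in_setU bS orbT.
  - by apply/eqP=> e; move: bnS; rewrite e muS.
  - rewrite (negbTE bnS); case: pickP => [s /andP[sS /eqP e]|/(_ mu)] /=.
      exact: hinj.
    by rewrite muS eqxx.
have muS : mu \notin S by rewrite (disjointFl hSSbar muSb).
rewrite /partner (negbTE muS).
move: muSb; rewrite -himg => /imsetP[s0 s0S e0].
case: pickP => [s /andP[sS /eqP e]|/(_ s0)] /=; last by rewrite s0S -e0 eqxx.
split.
- by rewrite in_setU sS.
- by apply/eqP=> e'; move: muS; rewrite -e' sS.
- by rewrite sS.
Qed.

Definition pr (a b : X) := (a \in SS) && ((b == a) || (b == pt a)).

Lemma pr_refl a : pr a a = (a \in SS). Proof. by rewrite /pr eqxx andbT. Qed.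

Lemma pr_SS a b : pr a b -> (a \in SS) && (b \in SS).
Proof.
case/andP=> aS /orP[/eqP->|/eqP->]; rewrite aS //.
by case: (pt_spec aS).
Qed.

Lemma pr_sym a b : pr a b -> pr b a.
Proof.
move=> h; case/andP: (pr_SS h) => aS bS; case/andP: h => _ /orP[/eqP->|/eqP->].
  by rewrite pr_refl.
case: (pt_spec aS) => pS _ ppa; by rewrite /pr pS ppa eqxx orbT.
Qed.

Lemma pr_symE a b : pr a b = pr b a.
Proof. by apply/idP/idP => /pr_sym. Qed.

Lemma pr_trans a b c : pr a b -> pr b c -> pr a c.
Proof.
move=> hab; case/andP: (pr_SS hab) => aS bS.
case/andP: hab => _ /orP[/eqP->|/eqP->] //.
case: (pt_spec aS) => pS _ ppa.
case/andP => _ /orP[/eqP->|/eqP->]; first by rewrite /pr aS eqxx orbT.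
by rewrite ppa pr_refl.
Qed.

Lemma pr_eq a b c : pr a b -> pr a c = pr b c.
Proof.
move=> hab; apply/idP/idP => h.
  exact: pr_trans (pr_sym hab) h.
exact: pr_trans hab h.
Qed.

Lemma pr_pt a : a \in SS -> pr a (pt a).
Proof. by move=> aS; rewrite /pr aS eqxx orbT. Qed.

Lemma pr_mem a x : a \in SS -> pr a x = (x == a) || (x == pt a).
Proof. by move=> aS; rewrite /pr aS. Qed.


Lemma sum_delta (c : R) a : \sum_(i <- enum X) (i == a)%:R * c = c.
Proof. by rewrite (sum_only _ a) => [|i /negbTE->]; rewrite ?eqxx ?mul1r ?mul0r. Qed.

Lemma sum_two (F : X -> R) a a' : a != a' ->
  \sum_(i <- enum X) F i * ((i == a) || (i == a'))%:R = F a + F a'.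
Proof.
move=> aa'.
rewrite (eq_bigr (fun i => (i == a)%:R * F a + (i == a')%:R * F a')) => [|i _].
  by rewrite big_split /= !sum_delta.
case: (eqVneq i a) => [->|ia]; first by rewrite /= ?eqxx ?(negbTE aa') /= ?mul1r ?mulr1 ?mul0r ?addr0.
case: (eqVneq i a') => [->|ia'] /=; first by rewrite ?mul1r ?mulr1 ?mul0r ?add0r.
by rewrite !mul0r mulr0 addr0.
Qed.

Lemma sem_Gam mu a b : sem (Gam51 T S bar mu a b) = (pr mu a && pr mu b)%:R.
Proof.
rewrite /Gam51; case: ifP => muT; first by rewrite sem_pzero /pr -notT muT.
by rewrite sem_pconst /pr -notT muT.
Qed.

Lemma GamSum (F : X -> R) a b :
  \sum_(mu <- enum X) F mu * (pr mu a && pr mu b)%:R = if pr a b then F a + F (pt a) else 0.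
Proof.
case: ifP => hab.
  case/andP: (pr_SS hab) => aS _; case: (pt_spec aS) => pS pa ppa.
  rewrite -sum_two; last by rewrite eq_sym.
  apply: eq_bigr => mu _; congr (_ * _%:R).
  rewrite (pr_symE mu a) (pr_symE mu b) -(pr_eq mu hab) andbb pr_mem //.
rewrite big1 // => mu _; case h: (pr mu a && pr mu b); last by rewrite mulr0.
case/andP: h => h1 h2; by rewrite (pr_trans (pr_sym h1) h2) in hab.
Qed.

Definition Gw (W : X -> R) a b := if pr a b then W a + W (pt a) else 0.

Lemma sem_nabla_raw w a b : sem (nabla51 T S bar w a b) =
  \sum_(mu <- enum X) sem (w mu) * (pr mu a && pr mu b)%:R + (tau a (sem (w b)) - sem (w b)).
Proof.
rewrite /nabla51 /add2 /psum2 sem_padd !sem_psum; congr (_ + _).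
  by apply: eq_bigr => mu _; rewrite /lmul2 sem_pmul sem_Gam.
rewrite (sum_only _ b) => [|i ib]; first by rewrite /tb1 eqxx sem_dpoly.
by rewrite /tb1 eq_sym (negbTE ib) sem_pzero.
Qed.

Lemma sem_nabla w a b : sem (nabla51 T S bar w a b) =
  Gw (fun x => sem (w x)) a b + (tau a (sem (w b)) - sem (w b)).
Proof. by rewrite sem_nabla_raw GamSum. Qed.

Lemma sem_nabla_e1 mu a b : sem (nabla51 T S bar (e1 mu) a b) = (pr mu a && pr mu b)%:R.
Proof.
rewrite sem_nabla_raw sem_e1 tau_nat subrr addr0.
rewrite (sum_only _ mu) => [|i imu]; first by rewrite sem_e1 eqxx mul1r.
by rewrite sem_e1 (negbTE imu) mul0r.
Qed.

Definition sigp (p : X * X) : X * X :=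
  if p.1 \in SS then (if p.2 == p.1 then (pt p.1, pt p.1)
                      else if p.2 == pt p.1 then p else (p.2, p.1))
  else (p.2, p.1).

Lemma sigpK p : sigp (sigp p) = p.
Proof.
case: p => mu nu; rewrite /sigp /=.
case muS: (mu \in SS).
  case: (pt_spec muS) => pS pm ppm.
  case: (eqVneq nu mu) => [->|num] /=; first by rewrite pS eqxx ppm.
  case: (eqVneq nu (pt mu)) => [->|nup] /=; first by rewrite muS (negbTE pm) eqxx.
  case nuS: (nu \in SS) => //=.
  rewrite eq_sym (negbTE num); case: (eqVneq mu (pt nu)) => [e|] //.
  by case: (pt_spec nuS) => _ _ ppn; move: nup; rewrite e ppn eqxx.
case nuS: (nu \in SS) => //=.
case: (eqVneq mu nu) => [e|_]; first by rewrite e nuS in muS.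
case: (eqVneq mu (pt nu)) => [e|_] //.
by case: (pt_spec nuS) => pS _ _; rewrite e pS in muS.
Qed.

Lemma sig51E mu nu a b :
  sig51 S Sbar bar mu nu a b = e2 (sigp (mu, nu)).1 (sigp (mu, nu)).2 a b.
Proof.
rewrite /sig51 /sigp /=; case: ifP => // _.
by case: ifP => // _; case: ifP.
Qed.

Lemma sem_sig51 mu nu a b :
  sem (sig51 S Sbar bar mu nu a b) = ((mu == (sigp (a, b)).1) && (nu == (sigp (a, b)).2))%:R.
Proof.
rewrite sig51E sem_e2; congr (_%:R).
have e: ((a, b) == sigp (mu, nu)) = (sigp (a, b) == (mu, nu)).
  by apply/eqP/eqP => [->|<-]; rewrite sigpK.
move: e; case: (sigp (mu, nu)) => x y; case: (sigp (a, b)) => x' y' /=.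
by rewrite !xpair_eqE => ->; rewrite (eq_sym x') (eq_sym y').
Qed.

Lemma sem_sigma t a b :
  sem (sigma51 S Sbar bar t a b) = sem (t (sigp (a, b)).1 (sigp (a, b)).2).
Proof.
rewrite /sigma51 sem_allpairs (sum_only _ (sigp (a, b)).1) => [|i hi].
  rewrite (sum_only _ (sigp (a, b)).2) => [|j hj].
    by rewrite sem_pmul sem_sig51 !eqxx mulr1.
  by rewrite sem_pmul sem_sig51 (negbTE hj) andbF mulr0.
by rewrite big1 // => j _; rewrite sem_pmul sem_sig51 (negbTE hi) mulr0.
Qed.


Lemma inN2_list (F : X -> form2 X) (l : seq X) :
  (forall i, inN2 V (F i)) -> inN2 V (fun a b => flatten [seq F i a b | i <- l]).
Proof.
move=> hF; elim: l => [|x l IH]; first by apply: (N2_eq (N2_zero V)) => a b m.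
by apply: (N2_eq (N2_add (hF x) IH)) => a b m.
Qed.

Definition Gsym (t : form2 X) (a b : X) : form2 X :=
  if (idx a < idx b)%N then lmul2 (t a b) (add2 (e2 a b) (e2 b a))
  else if a == b then lmul2 (t a b) (e2 a b) else @zero2 X.

Lemma Gsym_N2 t a b : inN2 V (Gsym t a b).
Proof.
rewrite /Gsym; case: ifP => _; first by apply: N2_lmul; apply: N2_gen2.
case: eqP => [->|_]; first by apply: N2_lmul; apply: N2_gen1.
exact: N2_zero.
Qed.

Lemma sem_Gsym t a b x y : sem (Gsym t a b x y) =
  sem (t a b) * (((idx a < idx b)%N || (a == b))%:R * ((x == a) && (y == b))%:R)
  + sem (t a b) * ((idx a < idx b)%N%:R * ((x == b) && (y == a))%:R).
Proof.
rewrite /Gsym; case: ifP => h /=.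
  by rewrite /lmul2 /add2 sem_pmul sem_padd !sem_e2 mulrDr !mul1r.
case: eqP => [->|_] /=.
  by rewrite /lmul2 sem_pmul sem_e2 mul1r mul0r mulr0 addr0.
by rewrite sem_pzero !mul0r mulr0 addr0.
Qed.

Lemma N2_sym t : (forall a b, sem (t a b) = sem (t b a)) -> inN2 V t.
Proof.
move=> hs.
have H := inN2_list (enum X) (fun i => inN2_list (enum X) (fun j => Gsym_N2 t i j)).
apply: (N2_eq H).
move=> x y; apply: sem_inj; rewrite sem_flatten.
under eq_bigr do rewrite sem_flatten.
under eq_bigr do under eq_bigr do rewrite sem_Gsym.
under eq_bigr do rewrite big_split /=.
rewrite big_split /=.
rewrite (sum_only _ x) => [|i ix]; last first.
  by rewrite big1 // => j _; rewrite [x == i]eq_sym (negbTE ix) /= !mulr0.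
rewrite (sum_only _ y) => [|j jy]; last by rewrite [y == j]eq_sym (negbTE jy) andbF /= !mulr0.
rewrite (sum_only _ y) => [|i iy]; last first.
  by rewrite big1 // => j _; rewrite [y == i]eq_sym (negbTE iy) andbF /= !mulr0.
rewrite (sum_only _ x) => [|j jx]; last by rewrite [x == j]eq_sym (negbTE jx) /= !mulr0.
rewrite !eqxx /= !mulr1 (hs y x) -mulrDr.
case: (ltngtP (idx x) (idx y)) => h /=.
- by rewrite addr0 mulr1.
- case: eqP => [e|]; last by rewrite add0r mulr1.
  by move: h; rewrite e ltnn.
- have -> : x = y by apply: enum_rank_inj; apply: val_inj.
  by rewrite eqxx addr0 mulr1.
Qed.

Lemma inN3_list (F : X -> form3 X) (l : seq X) :
  (forall i, inN3 V (F i)) -> inN3 V (fun a b c => flatten [seq F i a b c | i <- l]).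
Proof.
move=> hF; elim: l => [|x l IH]; first by apply: (N3_eq (N3_zero V)) => a b c m.
by apply: (N3_eq (N3_add (hF x) IH)) => a b c m.
Qed.

Lemma N3_sym t : (forall c a b, sem (t a b c) = sem (t b a c)) -> inN3 V t.
Proof.
move=> hs.
have h := inN3_list (enum X) (fun c => N3_gen c (N2_sym (hs c))).
apply: (N3_eq h) => a b c; apply: sem_inj; rewrite sem_flatten.
rewrite (sum_only _ c) => [|i ic]; first by rewrite /tb2 eqxx.
by rewrite /tb2 eq_sym (negbTE ic) sem_pzero.
Qed.


Ltac gen_tau := repeat match goal with |- context [?t] => lazymatch t with comp_mpoly _ _ => let y := fresh "y" in set y := t; clearbody y end end.

Lemma sem_add2 (t t' : form2 X) a b : sem (add2 t t' a b) = sem (t a b) + sem (t' a b).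
Proof. exact: sem_padd. Qed.

Lemma qmetric_ok : is_qmetric V (@gdiag X).
Proof.
split; first by move=> mu nu; rewrite /gdiag eq_sym.
split.
  exists (@gdiag X) => mu ka; rewrite /gdiag.
  have h : \big[addb/false]_(nu : X) ((mu == nu) && (nu == ka)) = (mu == ka).
    rewrite (bigD1 mu) //= eqxx /= big1 ?addbF // => i /negbTE.
    by rewrite eq_sym => ->.
  by split; rewrite h.
move=> rho a b; apply: sem_inj; rewrite /lmul2 sem_pmul sem_ract2 /gform sem_pconst.
rewrite /gdiag; case: eqP => [->|_]; first by rewrite tauK mulr1 mul1r.
by rewrite mulr0 mul0r.
Qed.

Local Notation nab := (nabla51 T S bar).
Local Notation sig := (sigma51 S Sbar bar).

Lemma nabla_eq w w' : eq1 w w' -> eq2 (nab w) (nab w').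
Proof.
move=> h a b; apply: sem_inj; rewrite !sem_nabla /Gw.
have h' x : sem (w x) = sem (w' x) by apply: peq_sem; exact: h.
by rewrite !h'.
Qed.

Lemma nabla_add w w' : eq2 (nab (add1 w w')) (add2 (nab w) (nab w')).
Proof.
move=> a b; apply: sem_inj; rewrite /add2 sem_padd !sem_nabla /Gw /add1 !sem_padd tauD.
case: ifP => _; gen_tau; ring.
Qed.

Lemma nabla_lmul p w :
  eq2 (nab (lmul1 p w)) (add2 (lmul2 p (nab w)) (tens11 V (dpoly V p) w)).
Proof.
move=> a b; apply: sem_inj.
rewrite /add2 sem_padd /lmul2 sem_pmul !sem_nabla sem_tens11 sem_dpoly /Gw /lmul1 !sem_pmul tauM.
case: ifP => _; gen_tau; ring.
Qed.

Lemma sigp_tau a b p :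
  tau (sigp (a, b)).1 (tau (sigp (a, b)).2 (sem p)) = tau a (tau b (sem p)).
Proof.
rewrite /sigp /=; case: ifP => aS; last exact: (tauC b a p).
case: eqP => [->|_]; first by rewrite !tauK.
case: eqP => _; [by [] | exact: (tauC b a p)].
Qed.

Lemma sigma_map : bimodule_map2 V sig.
Proof.
split.
  move=> t t' h a b; apply: sem_inj; rewrite !sem_sigma; exact: peq_sem.
split.
  by move=> t t' a b; apply: sem_inj; rewrite sem_sigma /add2 !sem_padd !sem_sigma.
split.
  by move=> p t a b; apply: sem_inj; rewrite sem_sigma /lmul2 !sem_pmul !sem_sigma.
move=> p t a b; apply: sem_inj; rewrite sem_sigma !sem_ract2 sem_sigma.
by rewrite sigp_tau.
Qed.

Lemma right_leibniz w p :
  eq2 (nab (ract1 V w p)) (add2 (ract2 V (nab w) p) (sig (tens11 V w (dpoly V p)))).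
Proof.
move=> a b; apply: sem_inj.
rewrite /add2 sem_padd sem_sigma sem_ract2 !sem_nabla sem_tens11 sem_dpoly /Gw !sem_ract1.
rewrite /sigp /= !tauM !tauB.
case aS: (a \in SS); last first.
  rewrite /pr aS /=.
  rewrite (tauC b a p).
  gen_tau.
  ring.
case: (pt_spec aS) => pS pa ppa.
case: (eqVneq b a) => [->|ba].
  rewrite ?eqxx /= pr_refl aS (tauK a p) (tauK (pt a) p); gen_tau; rewrite ?oppR; ring: (@two0R X).
case: (eqVneq b (pt a)) => [->|bp].
  rewrite ?eqxx ?(negbTE pa) /= (pr_pt aS); gen_tau; rewrite ?oppR; ring: (@two0R X).
rewrite /pr aS ?(negbTE ba) ?(negbTE bp) /= (tauC b a p); gen_tau; ring.
Qed.

Lemma conn_ok : bimodule_connection V nab sig.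
Proof.
split; first exact: nabla_eq.
split; first exact: nabla_add.
split; first exact: nabla_lmul.
split; first exact: sigma_map.
exact: right_leibniz.
Qed.

Lemma sig_inv : invertible2 sig.
Proof.
exists sig => t; split=> a b; apply: sem_inj; rewrite !sem_sigma -surjective_pairing sigpK //.
Qed.

Lemma Gw_sym W a b : Gw W a b = Gw W b a.
Proof.
rewrite /Gw -pr_symE; case: ifP => // h.
case/andP: (h) => aS /orP[/eqP->|/eqP->] //.
by case: (pt_spec aS) => _ _ ->; rewrite addrC.
Qed.

Lemma torsion_ok : torsion_free V nab.
Proof.
move=> w; apply: N2_sym => a b.
rewrite (sem_add2 (nab w) (dform1 V w) a b) (sem_add2 (nab w) (dform1 V w) b a).
rewrite !sem_nabla !sem_dform1 Gw_sym; gen_tau; rewrite ?oppR; ring: (@two0R X).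
Qed.


Lemma sem_add3 (t t' : form3 X) a b c : sem (add3 t t' a b c) = sem (t a b c) + sem (t' a b c).
Proof. exact: sem_padd. Qed.

Lemma semA a b c :
  sem (psum3 (fun mu => psum3 (fun nu => lmul3 (pconst X (gdiag mu nu)) (tb2 (nab (e1 mu)) nu))) a b c)
  = (pr c a && pr c b)%:R.
Proof.
rewrite /psum3 sem_psum (sum_only _ c) => [|i ic].
  rewrite sem_psum (sum_only _ c) => [|j jc].
    by rewrite /lmul3 sem_pmul sem_pconst /gdiag eqxx /tb2 eqxx mul1r sem_nabla_e1.
  by rewrite /lmul3 sem_pmul /tb2 [c == j]eq_sym (negbTE jc) sem_pzero mulr0.
rewrite sem_psum big1 // => j _; rewrite /lmul3 sem_pmul sem_pconst /gdiag /tb2.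
case: (eqVneq i j) => [<-|ij]; first by rewrite [c == i]eq_sym (negbTE ic) sem_pzero mulr0.
by rewrite mul0r.
Qed.

Lemma semB x y c :
  sem (psum3 (fun mu => psum3 (fun nu =>
     lmul3 (pconst X (gdiag mu nu)) (tens12 V (e1 mu) (nab (e1 nu))))) x y c)
  = (pr x y && pr x c)%:R.
Proof.
rewrite /psum3 sem_psum (sum_only _ x) => [|i ix].
  rewrite sem_psum (sum_only _ x) => [|j jx].
    by rewrite /lmul3 sem_pmul sem_pconst /gdiag eqxx mul1r sem_tens12 sem_e1 eqxx mul1r sem_nabla_e1 tau_nat.
  by rewrite /lmul3 sem_pmul sem_pconst /gdiag [x == j]eq_sym (negbTE jx) mul0r.
rewrite sem_psum big1 // => j _; rewrite /lmul3 sem_pmul sem_tens12 sem_e1 [x == i]eq_sym (negbTE ix).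
by rewrite mul0r mulr0.
Qed.

Lemma Gam_sigp a b c :
  pr (sigp (a, b)).1 (sigp (a, b)).2 && pr (sigp (a, b)).1 c = pr c a && pr c b.
Proof.
have gen : pr a b = false -> pr b a && pr b c = pr c a && pr c b.
  move=> nab; rewrite pr_symE nab /=; apply/esym/negbTE/negP => /andP[h1 h2].
  by rewrite (pr_trans (pr_sym h1) h2) in nab.
rewrite /sigp /=; case aS: (a \in SS); last by apply: gen; rewrite /pr aS.
have [pS pa ppa] := pt_spec aS.
case: eqP => [->|ba] /=.
  by rewrite pr_refl pS /= (pr_symE c a) -(pr_eq c (pr_pt aS)) andbb.
case: eqP => [->|bp] /=.
  by rewrite (pr_pt aS) /= (pr_symE c a) (pr_symE c (pt a)) -(pr_eq c (pr_pt aS)) andbb.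
apply: gen; rewrite /pr aS /=; apply/negbTE/norP; split; apply/eqP => //.
Qed.

Lemma metric_ok : metric_compatible V (@gdiag X) nab sig.
Proof.
move=> a b c; apply: sem_inj; rewrite sem_pzero sem_add3 semA /sigma_id sem_sigma semB.
by rewrite Gam_sigp addxx.
Qed.

Lemma pr_ptR a b : b \in SS -> pr a (pt b) = pr a b.
Proof.
move=> bS; apply/idP/idP => h.
  exact: pr_trans h (pr_sym (pr_pt bS)).
exact: pr_trans h (pr_pt bS).
Qed.

Lemma sem_curv w a b c : sem (curvature V nab w a b c) =
  tau a (tau b (sem (w c))) - tau a (sem (w c)) - tau b (sem (w c)) + sem (w c).
Proof.
rewrite /curvature; cbv beta zeta.
rewrite /psum3 sem_psum.
rewrite (eq_bigr (fun be => (if c == be then tau a (sem (nab w b be)) - sem (nab w b be) else 0)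
   + sem (nab w a be) * (pr be b && pr be c)%:R)) => [|be _]; last first.
  rewrite sem_padd /tb2; congr (_ + _).
    by case: eqP => _; rewrite ?sem_pzero ?sem_dform1.
  by rewrite sem_tens12 sem_nabla_e1 tau_nat.
rewrite big_split /= GamSum (sum_only _ c) => [|i ic]; last by rewrite eq_sym (negbTE ic).
rewrite eqxx !sem_nabla /Gw.
case hbc: (pr b c).
  case/andP: (pr_SS hbc) => bS _.
  rewrite (pr_ptR a bS); case: (pr a b); rewrite ?tauD ?tauB ?tauN ?tau0;
  gen_tau; rewrite ?oppR; ring: (@two0R X).
rewrite ?tauD ?tauB ?tauN ?tau0; gen_tau; rewrite ?oppR; ring: (@two0R X).
Qed.

Lemma curv_ok : curvature_zero V nab.
Proof.
move=> w; apply: N3_sym => c a b; rewrite !sem_curv (tauC a b (w c)).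
gen_tau; ring.
Qed.

End P51.

Theorem proposition5p1 (X : finType) (T S Sbar : {set X}) (bar : X -> X)
    (hTS : [disjoint T & S]) (hTSbar : [disjoint T & Sbar])
    (hSSbar : [disjoint S & Sbar]) (hcover : T :|: S :|: Sbar = [set: X])
    (hinj : {in S &, injective bar}) (himg : bar @: S = Sbar) :
  is_qmetric (@deltaV X) (@gdiag X) /\
  is_QLC (@deltaV X) (@gdiag X) (nabla51 T S bar) (sigma51 S Sbar bar) /\
  curvature_zero (@deltaV X) (nabla51 T S bar).
Proof.
split; first exact: qmetric_ok.
split; last by apply: (@curv_ok X T S Sbar bar).
split; first by apply: (@conn_ok X T S Sbar bar).
split; first by apply: (@sig_inv X S Sbar bar).
split; first by apply: (@torsion_ok X T S Sbar bar).
by apply: (@metric_ok X T S Sbar bar).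
Qed.
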